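(* Let $n,m$ be integers with $n\geq m\geq 0$. Then $$ gr_{3}(K_{3} : S(n,m))\geq \begin{cases} 5\cdot\frac{n}{2} +1 & \text{ if $n$ is even,}\\ 5\cdot\frac{n-1}{2} + 2 & \text{ if $n$ is odd.} \end{cases} $$
   Context: For integers $n\geq m\geq 0$, the double star $S(n,m)$ is the graph obtained from the disjoint union of the stars $K_{1,n}$ and $K_{1,m}$ by adding an edge between their centers. A $k$-coloring of a graph is an assignment of one of $k$ colors to each edge. A subgraph is rainbow if all its edges have distinct colors and monochromatic if all its edges have the same color. For graphs $G,H$ and a positive integer $k$, the Gallai–Ramsey number $gr_k(G:H)$ is the minimum integer $N$ such that every $k$-coloring of the edges of the complete graph $K_N$ contains either a rainbow copy of $G$ or a monochromatic copy of $H$. *)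

(* Defs.v *)
From mathcomp Require Import all_boot.
Set Implicit Arguments. Unset Strict Implicit. Unset Printing Implicit Defensive.

(* A k-coloring of the edges of K_N (vertices 'I_N): a symmetric map
   c : 'I_N -> 'I_N -> 'I_k; the values c x x are irrelevant. *)
Definition edge_coloring (N k : nat) (c : 'I_N -> 'I_N -> 'I_k) : Prop :=
  forall x y : 'I_N, c x y = c y x.

(* A (simple) graph is a finite type V with an adjacency relation E
   (we use symmetric irreflexive relations below). A copy of (V,E) in K_N is
   an injective map f : V -> 'I_N. *)

Definition has_rainbow_copy (N k : nat) (c : 'I_N -> 'I_N -> 'I_k)
    (V : finType) (E : rel V) : Prop :=
  exists f : V -> 'I_N, injective f /\
    forall x y x' y' : V, E x y -> E x' y' ->
      c (f x) (f y) = c (f x') (f y') ->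
      (x = x' /\ y = y') \/ (x = y' /\ y = x').

Definition has_mono_copy (N k : nat) (c : 'I_N -> 'I_N -> 'I_k)
    (V : finType) (E : rel V) : Prop :=
  exists f : V -> 'I_N, injective f /\
    exists col : 'I_k, forall x y : V, E x y -> c (f x) (f y) = col.

Definition gr_property (k : nat) (VG : finType) (G : rel VG)
    (VH : finType) (H : rel VH) (N : nat) : Prop :=
  forall c : 'I_N -> 'I_N -> 'I_k, edge_coloring c ->
    has_rainbow_copy c G \/ has_mono_copy c H.

(* gr_k(G:H) >= L, i.e. the minimum N with gr_property is at least L
   (stated without presupposing that such an N exists). *)
Definition gr_ge (k : nat) (VG : finType) (G : rel VG)
    (VH : finType) (H : rel VH) (L : nat) : Prop :=
  forall N : nat, gr_property k G H N -> L <= N.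

Definition K3 : rel 'I_3 := fun x y => x != y.

(* The double star S(n,m) on vertices 'I_(n+m+2): vertex 0 and vertex 1 are
   the adjacent centers; vertices 2..n+1 are the n leaves of center 0, and
   vertices n+2..n+m+1 are the m leaves of center 1. *)
Definition dstar_arc (n m : nat) (x y : 'I_(n + m + 2)) : bool :=
  [|| (val x == 0) && (val y == 1),
      (val x == 0) && (2 <= val y < n + 2)
    | (val x == 1) && (n + 2 <= val y)].

Definition double_star (n m : nat) : rel 'I_(n + m + 2) :=
  fun x y => @dstar_arc n m x y || @dstar_arc n m y x.

(* Main.v *)
Require Import Defs.
From mathcomp Require Import all_boot zify.

Definition gn (a b : nat) : nat :=
  if a == b then 2 else if ((a + 5 - b) %% 5) \in [:: 1; 4] then 0 else 1.

Definition colr (N : nat) (x y : 'I_N) : 'I_3 := inord (gn (x %% 5) (y %% 5)).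

Lemma gn_lt a b : gn a b < 3.
Proof. rewrite /gn; case: ifP => //; case: ifP => //. Qed.

Lemma gn_sym a b : a < 5 -> b < 5 -> gn a b = gn b a.
Proof.
move=> ha hb.
have H : all (fun x => all (fun y => gn x y == gn y x) (iota 0 5)) (iota 0 5) by [].
move/allP: H => /(_ a); rewrite mem_iota ha => /(_ isT) /allP /(_ b).
by rewrite mem_iota hb => /(_ isT) /eqP.
Qed.

Lemma gn_norainbow a b c : a < 5 -> b < 5 -> c < 5 ->
  gn a b = gn b c \/ gn b c = gn a c \/ gn a b = gn a c.
Proof.
move=> ha hb hc.
have H : all (fun x => all (fun y => all (fun z =>
   [|| gn x y == gn y z, gn y z == gn x z | gn x y == gn x z]) (iota 0 5)) (iota 0 5)) (iota 0 5) by [].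
move/allP: H => /(_ a); rewrite mem_iota ha => /(_ isT) /allP /(_ b).
rewrite mem_iota hb => /(_ isT) /allP /(_ c).
rewrite mem_iota hc => /(_ isT).
by case/or3P => /eqP; auto.
Qed.

Lemma gn_cnt (r : nat) (col : 'I_3) : r < 5 ->
  count (fun w => @inord 2 (gn r (w %% 5)) == col) (iota 0 5) <= 2.
Proof.
move=> hr.
have H : all (fun x => all (fun y =>
   count (fun w => gn x (w %% 5) == y) (iota 0 5) <= 2) (iota 0 3)) (iota 0 5) by [].
move/allP: H => /(_ r); rewrite mem_iota hr => /(_ isT) /allP /(_ col).
rewrite mem_iota ltn_ord => /(_ isT).
congr (_ <= 2); apply: eq_count => w.
apply/eqP/eqP => [H|<-]; first by rewrite H inord_val.
by rewrite inordK // gn_lt.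
Qed.

Lemma count_per (Q : nat -> bool) q a :
  count (fun w => Q (w %% 5)) (iota (5 * a) (5 * q)) =
  q * count (fun w => Q (w %% 5)) (iota 0 5).
Proof.
elim: q a => [|q IH] a; first by rewrite muln0.
rewrite mulnS iotaD count_cat.
have -> : 5 * a + 5 = 5 * a.+1 by rewrite mulnS addnC.
rewrite IH [q.+1 * _]mulSn; congr (_ + _).
rewrite -{1}(addn0 (5 * a)) iotaDl count_map; apply: eq_count => x /=.
by rewrite mulnC modnMDl.
Qed.

Lemma count_bound (Q : nat -> bool) t b N :
  N <= 5 * t + b ->
  count (fun w => Q (w %% 5)) (iota 0 N) <=
  t * count (fun w => Q (w %% 5)) (iota 0 5) + b.
Proof.
move=> hN.
apply: (@leq_trans (count (fun w => Q (w %% 5)) (iota 0 (5 * t + b)))).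
  by rewrite -(subnKC hN) iotaD count_cat leq_addr.
rewrite iotaD count_cat -(muln0 5) count_per muln0 leq_add2l.
by rewrite (leq_trans (count_size _ _)) // size_iota.
Qed.

Theorem lemma1 (n m : nat) (hmn : m <= n) :
  gr_ge 3 K3 (@double_star n m)
    (if odd n then 5 * ((n - 1) %/ 2) + 2 else 5 * (n %/ 2) + 1).
Proof.
move=> N HN; rewrite leqNgt; apply/negP => HNL.
set t := n %/ 2; set b : nat := odd n.
have hn : n = 2 * t + b by rewrite /t /b -modn2 mulnC -divn_eq.
have hN : N <= 5 * t + b.
  move: HNL; rewrite /b; case: (odd n) hn => /= hn; rewrite ?hn; lia.
case: (HN (@colr N)).
- by move=> x y; rewrite /colr gn_sym // ltn_pmod.
- move=> [f [_ Hf]].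
  pose o0 := @Ordinal 3 0 isT; pose o1 := @Ordinal 3 1 isT; pose o2 := @Ordinal 3 2 isT.
  have l5 : forall x : 'I_N, x %% 5 < 5 by move=> x; rewrite ltn_pmod.
  case: (@gn_norainbow _ _ _ (l5 (f o0)) (l5 (f o1)) (l5 (f o2))) => [H|[H|H]];
   [have := Hf o0 o1 o1 o2 isT isT | have := Hf o1 o2 o0 o2 isT isT
   | have := Hf o0 o1 o0 o2 isT isT];
   rewrite /colr H => /(_ erefl); by case=> -[/eqP H1 /eqP H2].
- move=> [f [finj [col Hcol]]].
  have h0 : 0 < n + m + 2 by rewrite addn2.
  pose v := f (Ordinal h0).
  have hi : forall i : 'I_(n+1), i.+1 < n + m + 2.
    by move=> i; have := ltn_ord i; lia.
  pose h := fun i : 'I_(n+1) => Ordinal (hi i).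
  pose P := fun w : nat => @inord 2 (gn (v %% 5) (w %% 5)) == col.
  pose s := [seq val (f (h i)) | i <- enum 'I_(n+1)].
  have us : uniq s.
    rewrite map_inj_uniq ?enum_uniq // => i j /val_inj /finj /(congr1 val) /= [].
    exact: val_inj.
  have ss : {subset s <= filter P (iota 0 N)}.
    move=> w /mapP [i _ ->]; rewrite mem_filter mem_iota leq0n add0n ltn_ord andbT /P.
    apply/andP; split=> //; apply/eqP; apply: (Hcol (Ordinal h0) (h i)).
    rewrite /double_star /dstar_arc /=; apply/orP; left.
    case: (nat_of_ord i) (ltn_ord i) => [|k] hk //.
    apply/orP; right; apply/orP; left; apply/andP; split=> //; lia.
  have := uniq_leq_size us ss.
  rewrite size_map size_enum_ord size_filter.
  have := @count_bound (fun r => @inord 2 (gn (v %% 5) r) == col) t b N hN.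
  have := @gn_cnt _ col (ltn_pmod v (isT : 0 < 5)).
  set k := count _ (iota 0 5) => hk.
  have : t * k <= t * 2 by rewrite leq_mul2l hk orbT.
  rewrite /P; clearbody t b k; set C := count _ (iota 0 N); lia.
Qed.
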